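(* Let $\Gamma$ be a totally ordered set, $\sigma:\Gamma\to\Gamma$ an order-preserving embedding with $\sigma(\gamma)<\gamma$ for all $\gamma$, and $(\mathbf k,\log)$ an ordered field with surjective logarithm. Let $G=\Gamma^{\mathbf k}$ with prelogarithmic section $l_\sigma$, and define $\psi_\sigma:G\to G$ by $\psi_\sigma(\prod_\gamma x_\gamma^{g(\gamma)})=\prod_\gamma x_{\sigma(\gamma)}^{g(\gamma)}$. Then $\psi_\sigma$ is a contracting morphism of $(\mathbf k((G)),l_\sigma)$ to itself, and the induced map $\psi_\sigma^{EL}$ on $\mathbf k((\Gamma^{\mathbf k}))^{\sigma EL}$ is a surjective contraction (surjective even if $\sigma$ is not).
   Context: Let $\mathbf k$ be an ordered field and $(G,\cdot,<)$ a totally ordered abelian group. $\mathbf k((G))$ denotes the field of generalized power series $\alpha=\sum_{g\in G}\alpha(g)\,g$ with anti-well-ordered support, usual operations, canonical valuation $v(\alpha)=\max\operatorname{supp}\alpha$ and ordering $\alpha>0$ iff $\alpha(v(\alpha))>0$. $\mathbf k((S))=\{\alpha:\operatorname{supp}\alpha\subseteq S\}$, $G^{>1}=\{g>1\}$. Hahn group: $\Gamma^{\mathbf k}$ is the set of formal products $g=\prod_{\gamma\in\Gamma}x_\gamma^{g(\gamma)}$, $g(\gamma)\in\mathbf k$, with anti-well-ordered support in $\Gamma$, multiplied pointwise, ordered by $g>1$ iff $g(\max\operatorname{supp}g)>0$. The prelogarithmic section $l_\sigma(\prod x_\gamma^{g(\gamma)})=\sum_\gamma g(\gamma)\,x_{\sigma(\gamma)}$.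 A prelogarithmic section is an order-preserving group embedding $l:(G,\cdot)\to(\mathbf k((G^{>1})),+)$. Exponential extension: $G^\#$ is the ordered abelian group of formal symbols $e(\alpha)$, $\alpha\in\mathbf k((G^{>1}))$, with $e(\alpha)e(\beta)=e(\alpha+\beta)$, $e(\alpha)<e(\beta)\iff\alpha<\beta$, and $e(l(g))$ identified with $g\in G$; $l^\#(e(\alpha))=\alpha$ is a prelogarithmic section extending $l$. Iterating gives $G^{\#n}$, $l^{\#n}$; $\mathbf k((G))^{EL}=\bigcup_n\mathbf k((G^{\#n}))$, $G^{EL}=\bigcup_nG^{\#n}$. For $(G,l)=(\Gamma^{\mathbf k},l_\sigma)$ the field is denoted $\mathbf k((\Gamma^{\mathbf k}))^{\sigma EL}$. An order-preserving group embedding $\psi:G\to G$, extended to $\mathbf k((G))$ by $\psi(\sum a_gg)=\sum a_g\psi(g)$, is a morphism of $(\mathbf k((G)),l)$ to itself if $\psi\circ l=l\circ\psi$ on $G$; it induces $\psi^\#=(l^\#)^{-1}\circ\psi\circ l^\#$ on $G^\#$, iterates $\psi^{\#n}$, and $\psi^{EL}=\bigcup_n\psi^{\#n}$. $\psi$ is contracting if $\psi(g)<g$ for all $g\in G^{>1}$; $\psi^{EL}$ is a contraction if $\psi^{EL}(g)<g$ for all $g\in G^{EL}$ with $g>1$. *)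

(* Defs.v *)
From HB Require Import structures.
From mathcomp Require Import all_boot all_order all_algebra.
From Stdlib Require Import ClassicalEpsilon.
Unset Printing Implicit Defensive.
Import Order.TTheory GRing.Theory Num.Theory.
Local Open Scope ring_scope.

(* push f a : the series  sum_x a(x) f(x)  (f injective in all uses):
   (push f a)(b) = a(x) if b = f x, and 0 if b is not in the image of f. *)
Definition push {k : realFieldType} {A B : Type} (f : A -> B) (a : A -> k) : B -> k :=
  fun b => match excluded_middle_informative (exists x, f x = b) with
           | left H => a (proj1_sig (constructive_indefinite_description _ H))
           | right _ => 0
           end.

Definition supp {k : realFieldType} {X : Type} (a : X -> k) : X -> Prop :=
  fun x => a x <> 0.

Definition anti_wo {X : Type} (lt : X -> X -> Prop) (S : X -> Prop) : Prop :=
  forall A : X -> Prop, (forall x, A x -> S x) -> (exists x, A x) ->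
    exists m, A m /\ forall x, A x -> ~ lt m x.

Definition hahn_in {k : realFieldType} {X : Type} (lt : X -> X -> Prop)
  (S : X -> Prop) (a : X -> k) : Prop :=
  anti_wo lt (supp a) /\ forall x, supp a x -> S x.

Definition is_val {k : realFieldType} {X : Type} (lt : X -> X -> Prop)
  (a : X -> k) (x : X) : Prop :=
  a x <> 0 /\ forall y, a y <> 0 -> ~ lt x y.

Definition hpos {k : realFieldType} {X : Type} (lt : X -> X -> Prop) (a : X -> k) : Prop :=
  exists x, is_val lt a x /\ 0 < a x.

Definition hlt {k : realFieldType} {X : Type} (lt : X -> X -> Prop) (a b : X -> k) : Prop :=
  hpos lt (fun x => b x - a x).

(* Carriers of the tower: G^{#0} = Gamma^k is represented by exponent
   functions Gamma -> k; G^{#(n+1)} = { e(alpha) | alpha in k((G^{#n, >1})) }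
   is represented by the series alpha : G^{#n} -> k.  The embedding
   G^{#n} -> G^{#(n+1)}, g |-> e(l^{#n}(g)), is l_n below. *)
Fixpoint T (k : realFieldType) (Gam : Type) (n : nat) : Type :=
  match n with
  | 0 => Gam -> k
  | S n => T k Gam n -> k
  end.

Definition xmon {k : realFieldType} {Gam : eqType} (delta : Gam) : Gam -> k :=
  fun g => if g == delta then 1 else 0.

(* l_sigma (prod x_g^{a(g)}) = sum a(g) x_{sigma g} *)
Definition lsig {k : realFieldType} {Gam : eqType} (sigma : Gam -> Gam)
  (a : Gam -> k) : (Gam -> k) -> k :=
  push (fun g => xmon (k:=k) (sigma g)) a.

Fixpoint one_n (k : realFieldType) (Gam : Type) (n : nat) : T k Gam n :=
  match n return T k Gam n with
  | 0 => fun _ => 0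
  | S n => fun _ => 0
  end.

(* group law of G^{#n}: pointwise addition of exponents / e(a)e(b)=e(a+b) *)
Fixpoint mul_n (k : realFieldType) (Gam : Type) (n : nat) : T k Gam n -> T k Gam n -> T k Gam n :=
  match n return T k Gam n -> T k Gam n -> T k Gam n with
  | 0 => fun a b x => a x + b x
  | S n => fun a b x => a x + b x
  end.

Fixpoint lt_n (k : realFieldType) {d} (Gam : orderType d) (n : nat) :
  T k Gam n -> T k Gam n -> Prop :=
  match n return T k Gam n -> T k Gam n -> Prop with
  | 0 => hlt (fun a b : Gam => (a < b)%O)
  | S n => hlt (lt_n k Gam n)
  end.

Fixpoint mem_n (k : realFieldType) {d} (Gam : orderType d) (n : nat) : T k Gam n -> Prop :=
  match n return T k Gam n -> Prop with
  | 0 => hahn_in (fun a b : Gam => (a < b)%O) (fun _ => True)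
  | S n => hahn_in (lt_n k Gam n)
             (fun t => mem_n k Gam n t /\ lt_n k Gam n (one_n k Gam n) t)
  end.

Fixpoint l_n (k : realFieldType) {d} (Gam : orderType d) (sigma : Gam -> Gam) (n : nat) :
  T k Gam n -> T k Gam (S n) :=
  match n return T k Gam n -> T k Gam (S n) with
  | 0 => lsig sigma
  | S n => push (l_n k Gam sigma n)
  end.

Fixpoint psi_n (k : realFieldType) {d} (Gam : orderType d) (sigma : Gam -> Gam) (n : nat) :
  T k Gam n -> T k Gam n :=
  match n return T k Gam n -> T k Gam n with
  | 0 => push sigma
  | S n => push (psi_n k Gam sigma n)
  end.

Fixpoint emb (k : realFieldType) {d} (Gam : orderType d) (sigma : Gam -> Gam) (n j : nat) :
  T k Gam n -> T k Gam (Nat.add j n) :=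
  match j return T k Gam n -> T k Gam (Nat.add j n) with
  | 0 => fun t => t
  | S j => fun t => l_n k Gam sigma (Nat.add j n) (emb k Gam sigma n j t)
  end.

(* Main.v *)
Require Import Defs.
From HB Require Import structures.
From mathcomp Require Import all_boot all_order all_algebra.
From mathcomp Require Import ring lra.
From Stdlib Require Import Classical FunctionalExtensionality ClassicalEpsilon.
Import Order.TTheory GRing.Theory Num.Theory.
Local Open Scope ring_scope.

Section Generic.
Context {k : realFieldType}.

Lemma pushE {A B : Type} (f : A -> B) (a : A -> k) x :
  injective f -> push f a (f x) = a x.
Proof.
move=> fi; rewrite /push; case: excluded_middle_informative => [H|H]; last first.
  by exfalso; apply H; exists x.
by destruct (constructive_indefinite_description _ H) as [y Hy]; rewrite /= (fi _ _ Hy).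
Qed.

Lemma push_out {A B : Type} (f : A -> B) (a : A -> k) b :
  ~ (exists x, f x = b) -> push f a b = 0.
Proof. by move=> H; rewrite /push; case: excluded_middle_informative. Qed.

Lemma push_nz {A B : Type} {f : A -> B} {a : A -> k} {b} :
  push f a b <> 0 -> exists x, f x = b /\ a x <> 0.
Proof.
rewrite /push; case: excluded_middle_informative => [H|H] //.
destruct (constructive_indefinite_description _ H) as [y Hy] => /= nz.
by exists y.
Qed.

Lemma push_add {A B : Type} (f : A -> B) (a b : A -> k) :
  push f (fun x => a x + b x) = fun y => push f a y + push f b y.
Proof.
apply: functional_extensionality => y; rewrite /push.
by case: excluded_middle_informative => //= _; rewrite addr0.
Qed.

Lemma push_sub {A B : Type} (f : A -> B) (a b : A -> k) :
  push f (fun x => b x - a x) = fun y => push f b y - push f a y.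
Proof.
apply: functional_extensionality => y; rewrite /push.
by case: excluded_middle_informative => //= _; rewrite subr0.
Qed.

Lemma push_zero {A B : Type} (f : A -> B) :
  push f (fun _ => (0 : k)) = fun _ => 0.
Proof.
apply: functional_extensionality => y; rewrite /push.
by case: excluded_middle_informative.
Qed.

Lemma push_inj {A B : Type} (f : A -> B) :
  injective f -> injective (push f : (A -> k) -> (B -> k)).
Proof.
move=> fi a b H; apply: functional_extensionality => x.
by rewrite -(pushE f a x fi) -(pushE f b x fi) H.
Qed.

Lemma push_comp {A B C : Type} (f : B -> C) (g : A -> B) (a : A -> k) :
  injective f -> injective g -> push f (push g a) = push (fun x => f (g x)) a.
Proof.
move=> fi gi; apply: functional_extensionality => c.
case: (classic (exists x, f (g x) = c)) => [[x <-]|H].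
  rewrite (pushE _ _ _ fi) (pushE _ _ _ gi).
  by rewrite (pushE (fun x => f (g x)) a x) // => u v /fi /gi.
rewrite (push_out _ _ _ H).
case: (classic (exists y, f y = c)) => [[y Hy]|H2]; last by rewrite push_out.
subst c; rewrite (pushE _ _ _ fi) push_out // => [[x Hx]]; apply: H; exists x.
by rewrite Hx.
Qed.

Definition sto {X : Type} (lt : X -> X -> Prop) (M : X -> Prop) :=
  (forall x, ~ lt x x) /\
  (forall x y z, M x -> M y -> M z -> lt x y -> lt y z -> lt x z) /\
  (forall x y, M x -> M y -> x = y \/ lt x y \/ lt y x).

Definition reflects {X Y : Type} (ltX : X -> X -> Prop) (ltY : Y -> Y -> Prop)
  (f : X -> Y) (M : X -> Prop) :=
  forall x y, M x -> M y -> ltY (f x) (f y) -> ltX x y.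

Lemma hlt_irr {X : Type} (lt : X -> X -> Prop) (a : X -> k) : ~ hlt lt a a.
Proof. by move=> [x [[nz _] _]]; apply: nz; rewrite subrr. Qed.

Lemma supp_sub {X : Type} {a b : X -> k} {x} :
  supp (fun x => b x - a x) x -> supp a x \/ supp b x.
Proof.
rewrite /supp => H; case: (classic (a x = 0)) => Ha; last by left.
right => Hb; apply: H; rewrite Ha Hb subrr //.
Qed.

Lemma split_nz {X : Type} {a b c : X -> k} {y} :
  c y - a y <> 0 -> c y - b y <> 0 \/ b y - a y <> 0.
Proof.
move=> H; case: (classic (c y - b y = 0)) => H1; last by left.
right => H2; apply: H; lra.
Qed.

Lemma anti_wo_union {X : Type} {lt : X -> X -> Prop} {M} {S1 S2 : X -> Prop} :
  sto lt M -> (forall x, S1 x -> M x) -> (forall x, S2 x -> M x) ->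
  anti_wo lt S1 -> anti_wo lt S2 -> anti_wo lt (fun x => S1 x \/ S2 x).
Proof.
move=> [irr [tr tri]] M1 M2 w1 w2 A sA [x0 Ax0].
case: (classic (exists x, A x /\ S1 x)) => E1;
case: (classic (exists x, A x /\ S2 x)) => E2.
- have [m1 [[Am1 S1m1] mx1]] := w1 (fun x => A x /\ S1 x) (fun x h => h.2) E1.
  have [m2 [[Am2 S2m2] mx2]] := w2 (fun x => A x /\ S2 x) (fun x h => h.2) E2.
  case: (tri m1 m2 (M1 _ S1m1) (M2 _ S2m2)) => [e|[l|l]].
  + subst m2; exists m1; split => // x Ax; case: (sA x Ax) => Sx.
      by apply: mx1.
    by apply: mx2.
  + exists m2; split => // x Ax; case: (sA x Ax) => Sx; last by apply: mx2.
    move=> l2; apply: (mx1 x) => //; apply: (tr _ _ _ (M1 _ S1m1) (M2 _ S2m2) (M1 _ Sx)) => //.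
  + exists m1; split => // x Ax; case: (sA x Ax) => Sx; first by apply: mx1.
    move=> l2; apply: (mx2 x) => //; apply: (tr _ _ _ (M2 _ S2m2) (M1 _ S1m1) (M2 _ Sx)) => //.
- have [m1 [[Am1 S1m1] mx1]] := w1 (fun x => A x /\ S1 x) (fun x h => h.2) E1.
  exists m1; split => // x Ax; case: (sA x Ax) => Sx; first by apply: mx1.
  by exfalso; apply: E2; exists x.
- have [m2 [[Am2 S2m2] mx2]] := w2 (fun x => A x /\ S2 x) (fun x h => h.2) E2.
  exists m2; split => // x Ax; case: (sA x Ax) => Sx; last by apply: mx2.
  by exfalso; apply: E1; exists x.
- by exfalso; case: (sA x0 Ax0) => Sx; [apply: E1|apply: E2]; exists x0.
Qed.

Lemma hlt_sto {X : Type} (lt : X -> X -> Prop) M (S : X -> Prop) :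
  sto lt M -> (forall x, S x -> M x) -> sto (@hlt k _ lt) (@hahn_in k _ lt S).
Proof.
move=> st SM; have [irr [tr tri]] := st; split; first exact: hlt_irr.
split.
  move=> a b c [wa sa] [wb sb] [wc sc].
  move=> [m1 [[nz1 mx1] p1]] [m2 [[nz2 mx2] p2]].
  have Mm1 : M m1 by case: (supp_sub (a:=a) (b:=b) nz1) => h; apply: SM; [apply: sa|apply: sb].
  have Mm2 : M m2 by case: (supp_sub (a:=b) (b:=c) nz2) => h; apply: SM; [apply: sb|apply: sc].
  case: (tri m1 m2 Mm1 Mm2) => [e|[l|l]].
  - subst m2; exists m1; split; last by lra.
    split; first by lra.
    move=> y /(split_nz (b:=b)) [h|h]; [exact: mx2|exact: mx1].
  - have z : b m2 - a m2 = 0 by apply: NNPP => h; exact: (mx1 _ h l).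
    exists m2; split; last by lra.
    split; first by lra.
    move=> y /(split_nz (b:=b)) [h|h]; first exact: mx2.
    have My : M y by case: (supp_sub (a:=a) (b:=b) h) => h'; apply: SM; [apply: sa|apply: sb].
    move=> l2; apply: (mx1 y h); exact: (tr _ _ _ Mm1 Mm2 My l l2).
  - have z : c m1 - b m1 = 0 by apply: NNPP => h; exact: (mx2 _ h l).
    exists m1; split; last by lra.
    split; first by lra.
    move=> y /(split_nz (b:=b)) [h|h]; last exact: mx1.
    have My : M y by case: (supp_sub (a:=b) (b:=c) h) => h'; apply: SM; [apply: sb|apply: sc].
    move=> l2; apply: (mx2 y h); exact: (tr _ _ _ Mm2 Mm1 My l l2).
move=> a b [wa sa] [wb sb].
case: (classic (exists x, b x - a x <> 0)) => E; last first.
  left; apply: functional_extensionality => x.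
  apply: NNPP => h; apply: E; exists x => h2; apply: h; lra.
have w := anti_wo_union (lt:=lt) (M:=M) st (fun x h => SM _ (sa x h)) (fun x h => SM _ (sb x h)) wa wb.
have [m [nzm mx]] := w (supp (fun x => b x - a x)) (fun x h => supp_sub (a:=a) (b:=b) h) E.
have : b m - a m != 0 by apply/eqP.
rewrite neq_lt => /orP [h|h].
  right; right; exists m; split; last by lra.
  split; first by lra.
  move=> y h2; apply: mx; rewrite /supp => h3; apply: h2; lra.
right; left; exists m; split; last by lra.
by split.
Qed.

Lemma hpos_push {X Y : Type} (ltX : X -> X -> Prop) (ltY : Y -> Y -> Prop)
  (f : X -> Y) M (c : X -> k) :
  injective f -> reflects ltX ltY f M -> (forall x, supp c x -> M x) ->
  hpos ltX c -> hpos ltY (push f c).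
Proof.
move=> fi rf sc [m [[nz mx] p]]; exists (f m); split; last by rewrite (pushE _ _ _ fi).
split; first by move=> h; apply: nz; move: h; rewrite (pushE _ _ _ fi).
move=> y h0 l; have [x [ex h]] := push_nz h0; subst y; apply: (mx x h).
by apply: rf => //; apply: sc.
Qed.

Lemma hlt_push {X Y : Type} (ltX : X -> X -> Prop) (ltY : Y -> Y -> Prop)
  (f : X -> Y) M (a b : X -> k) :
  injective f -> reflects ltX ltY f M -> (forall x, supp a x -> M x) ->
  (forall x, supp b x -> M x) ->
  hlt ltX a b -> hlt ltY (push f a) (push f b).
Proof.
move=> fi rf sa sb h; rewrite /hlt -push_sub.
apply: (hpos_push _ _ _ M _ fi rf _ h) => x /supp_sub [h1|h1]; [exact: sa|exact: sb].
Qed.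

Lemma hahn_push {X Y : Type} (ltX : X -> X -> Prop) (ltY : Y -> Y -> Prop)
  (f : X -> Y) (S : X -> Prop) (S' : Y -> Prop) (c : X -> k) :
  injective f -> reflects ltX ltY f S -> (forall x, S x -> S' (f x)) ->
  hahn_in ltX S c -> hahn_in ltY S' (push f c).
Proof.
move=> fi rf fS [w sc]; split; last first.
  by move=> y /push_nz [x [<- h]]; apply: fS; apply: sc.
move=> A sA [y0 Ay0].
have [x0 [ex0 _]] := push_nz (sA _ Ay0).
have sA' : forall x, A (f x) -> supp c x.
  by move=> x /sA; rewrite /supp (pushE _ _ _ fi).
have [m [Am mx]] := w (fun x => A (f x)) sA' (ex_intro _ x0 (eq_ind_r A Ay0 ex0)).
exists (f m); split => // y Ay.
have [x [ex _]] := push_nz (sA _ Ay); subst y.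
move=> l; apply: (mx x Ay); by apply: rf => //; apply: sc; apply: sA'.
Qed.

Lemma reflects_of_mono {X Y : Type} (ltX : X -> X -> Prop) (ltY : Y -> Y -> Prop)
  (f : X -> Y) M M' :
  sto ltX M -> sto ltY M' -> (forall x, M x -> M' (f x)) ->
  (forall x y, M x -> M y -> ltX x y -> ltY (f x) (f y)) -> reflects ltX ltY f M.
Proof.
move=> [_ [_ tri]] [irr' [tr' _]] fM mono x y Mx My l.
case: (tri x y Mx My) => [e|[l2|l2]] //.
  by subst y; exfalso; exact: (irr' _ l).
exfalso; apply: (irr' (f x)).
apply: (tr' _ _ _ (fM _ Mx) (fM _ My) (fM _ Mx) l); exact: mono.
Qed.

Lemma hahn_zero {X : Type} (lt : X -> X -> Prop) S : hahn_in lt S (fun _ => (0 : k)).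
Proof. by split => [A sA [x Ax]|x h]; exfalso; [apply: (sA x Ax)|apply: h]. Qed.

Lemma contr_gen {X : Type} (lt : X -> X -> Prop) M S (f : X -> X) (c : X -> k) :
  sto lt M -> (forall x, S x -> M x) -> (forall x, S x -> M (f x)) ->
  (forall x, S x -> lt (f x) x) -> hahn_in lt S c ->
  hpos lt (fun x => c x - 0) -> hpos lt (fun x => c x - push f c x).
Proof.
move=> [irr [tr tri]] SM fM fl [w sc] [m [[nz mx] p]].
have nzm : c m <> 0 by move=> h; apply: nz; rewrite h subr0.
have z : push f c m = 0.
  apply: NNPP => h0; have [x [ex h]] := push_nz h0; apply: (mx x).
    by rewrite subr0.
  by rewrite -ex; apply: fl; apply: sc.
exists m; split; last by rewrite z; move: p; rewrite !subr0.
split; first by rewrite z.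
move=> y h0; case: (split_nz (b:=fun _ => 0) h0) => h.
  by apply: mx.
have h' : push f c y <> 0 by move=> e; apply: h; rewrite e subr0.
have [x [ex hx]] := push_nz h'; subst y.
have Sx := sc _ hx.
move=> l; apply: (mx x); first by rewrite subr0.
exact: (tr _ _ _ (SM _ (sc _ nzm)) (fM _ Sx) (SM _ Sx) l (fl _ Sx)).
Qed.

End Generic.
Section Levels.
Variables (d : Order.disp_t) (Gam : orderType d) (sigma : Gam -> Gam).
Hypothesis sigma_mono : forall a b : Gam, (a < b)%O -> (sigma a < sigma b)%O.
Hypothesis sigma_lt : forall g : Gam, (sigma g < g)%O.
Variable k : realFieldType.

Notation L n := (lt_n k Gam n).
Notation Mm n := (mem_n k Gam n).
Notation one n := (one_n k Gam n).
Notation P n := (psi_n k Gam sigma n).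
Notation Sn n := (fun t => mem_n k Gam n t /\ lt_n k Gam n (one_n k Gam n) t).

Lemma sto_gam : sto (fun a b : Gam => (a < b)%O) (fun _ => True).
Proof.
split; first by move=> x; rewrite ltxx.
split; first by move=> x y z _ _ _; apply: lt_trans.
move=> x y _ _; case: (ltgtP x y) => h; auto.
Qed.

Lemma sto_n n : sto (L n) (Mm n).
Proof.
elim: n => [|n IH].
  exact: (@hlt_sto k _ _ _ (fun _ => True) sto_gam (fun _ _ => I)).
exact: (@hlt_sto k _ _ _ (Sn n) IH (fun x h => h.1)).
Qed.

Lemma one_mem n : Mm n (one n).
Proof. by case: n => [|n]; apply: hahn_zero. Qed.

Lemma sigma_inj : injective sigma.
Proof.
move=> a b e; case: (ltgtP a b) => // h; have := sigma_mono _ _ h; by rewrite e ltxx.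
Qed.

Lemma sigma_refl : reflects (fun a b : Gam => (a < b)%O) (fun a b : Gam => (a < b)%O)
  sigma (fun _ => True).
Proof.
apply: (reflects_of_mono _ _ _ _ _ sto_gam sto_gam) => // x y _ _; exact: sigma_mono.
Qed.

Lemma psi_inj n : injective (P n).
Proof.
elim: n => [|n IH]; [exact: (push_inj _ sigma_inj)|exact: (push_inj _ IH)].
Qed.

Lemma psi_one n : P n (one n) = one n.
Proof. by case: n => [|n]; apply: push_zero. Qed.

Lemma psi_prop n : (forall t, Mm n t -> Mm n (P n t)) /\
  (forall a b, Mm n a -> Mm n b -> L n a b -> L n (P n a) (P n b)).
Proof.
elim: n => [|n [pm pl]].
  split.
    move=> t ht; apply: (hahn_push _ _ _ _ _ _ sigma_inj sigma_refl) => //.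
  move=> a b [_ sa] [_ sb] h.
  by apply: (hlt_push _ _ _ _ _ _ sigma_inj sigma_refl).
have rf : reflects (L n) (L n) (P n) (Mm n).
  exact: (reflects_of_mono _ _ _ _ _ (sto_n n) (sto_n n) pm pl).
split.
  move=> t ht; apply: (hahn_push _ _ _ (Sn n) (Sn n) _ (psi_inj n)); last exact: ht.
    by move=> x y hx hy; apply: rf; [exact: hx.1|exact: hy.1].
  move=> x [hx lx]; split; first exact: pm.
  rewrite -psi_one; apply: pl => //; exact: one_mem.
move=> a b [_ sa] [_ sb] h.
apply: (hlt_push _ _ _ (Mm n) _ _ (psi_inj n) rf) => //.
  by move=> x /sa [].
by move=> x /sb [].
Qed.

Lemma psi_contr n g : Mm n g -> L n (one n) g -> L n (P n g) g.
Proof.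
elim: n g => [|n IH] g hg hl.
  exact: (contr_gen _ (fun _ => True) (fun _ => True) sigma g sto_gam
     (fun _ _ => I) (fun _ _ => I) (fun x _ => sigma_lt x) hg hl).
refine (contr_gen _ (Mm n) (Sn n) (P n) g (sto_n n) _ _ _ hg hl).
- by move=> x [].
- by move=> x [hx _]; apply: (psi_prop n).1.
- by move=> x [hx lx]; apply: IH.
Qed.


Lemma xmon_inj : injective (@xmon k Gam).
Proof.
move=> a b e; have := congr1 (fun f => f a) e; rewrite /xmon eqxx.
by case: eqP => // _ /eqP; rewrite oner_eq0.
Qed.

Lemma push_xmon x : push sigma (@xmon k Gam x) = xmon (sigma x).
Proof.
apply: functional_extensionality => b.
case: (classic (exists y, sigma y = b)) => [[y <-]|H].
  by rewrite (pushE _ _ _ sigma_inj) /xmon (inj_eq sigma_inj).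
rewrite push_out // /xmon; case: eqP => // e; exfalso; apply: H; exists x.
by rewrite e.
Qed.

Lemma xmon_mem g : Mm 0 (@xmon k Gam g).
Proof.
split => // A sA [x Ax]; exists g.
have eg : forall y, A y -> y = g.
  by move=> y /sA; rewrite /supp /xmon; case: eqP => // _; rewrite eqxx.
split; first by rewrite -(eg x Ax).
by move=> y /eg ->; rewrite ltxx.
Qed.

Lemma xmon_gt1 g : L 0 (one 0) (@xmon k Gam g).
Proof.
exists g; split; last by rewrite /xmon eqxx subr0 ltr01.
split; first by rewrite /xmon eqxx subr0; apply/eqP; exact: oner_neq0.
move=> y; rewrite /xmon; case: eqP => [->|_]; first by rewrite ltxx.
by rewrite subr0 => h; exfalso; apply: h.
Qed.

Lemma xmon_mono a b : (a < b)%O -> L 0 (@xmon k Gam a) (@xmon k Gam b).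
Proof.
move=> l; have nab : (b == a) = false by apply/eqP => e; move: l; rewrite e ltxx.
exists b; split; [split|]; last by rewrite /= /xmon eqxx nab subr0 ltr01.
  by rewrite /= /xmon eqxx nab subr0; apply/eqP; exact: oner_neq0.
move=> y; rewrite /xmon; case: (eqVneq y b) => [->|nb]; first by rewrite ltxx.
case: (eqVneq y a) => [->|na]; first by move=> _ /(lt_trans l); rewrite ltxx.
by rewrite subrr.
Qed.

Fixpoint pre (n : nat) : T k Gam n -> T k Gam (S n) :=
  match n return T k Gam n -> T k Gam (S n) with
  | 0 => push (@xmon k Gam)
  | S n => push (pre n)
  end.

Lemma pre_inj n : injective (pre n).
Proof. elim: n => [|n IH]; [exact: (push_inj _ xmon_inj)|exact: (push_inj _ IH)]. Qed.

Lemma pre_one n : pre n (one n) = one (S n).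
Proof. by case: n => [|n]; apply: push_zero. Qed.

Lemma psi_pre n t : P (S n) (pre n t) = l_n k Gam sigma n t.
Proof.
elim: n t => [|n IH] t.
  rewrite /= push_comp; [|exact: (push_inj _ sigma_inj)|exact: xmon_inj].
  rewrite /lsig; congr push; apply: functional_extensionality => x.
  exact: push_xmon.
rewrite /= push_comp; [|exact: (push_inj _ (psi_inj n))|exact: pre_inj].
congr push; apply: functional_extensionality => x; exact: IH.
Qed.

Lemma xmon_refl : reflects (fun a b : Gam => (a < b)%O) (L 0) (@xmon k Gam) (fun _ => True).
Proof.
apply: (reflects_of_mono _ _ _ _ _ sto_gam (sto_n 0)).
  move=> x _; exact: xmon_mem.
move=> x y _ _; exact: xmon_mono.
Qed.

Lemma pre_prop n : (forall t, Mm n t -> Mm (S n) (pre n t)) /\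
  (forall a b, Mm n a -> Mm n b -> L n a b -> L (S n) (pre n a) (pre n b)).
Proof.
elim: n => [|n [qm ql]].
  split.
    move=> t ht; apply: (hahn_push _ _ _ (fun _ => True) (Sn 0) _ xmon_inj xmon_refl);
      last exact: ht.
    move=> x _; split; [exact: xmon_mem|exact: xmon_gt1].
  move=> a b [_ sa] [_ sb] h.
  by apply: (hlt_push _ _ _ _ _ _ xmon_inj xmon_refl).
have rf : reflects (L n) (L (S n)) (pre n) (Mm n).
  exact: (reflects_of_mono _ _ _ _ _ (sto_n n) (sto_n (S n)) qm ql).
split.
  move=> t ht; apply: (hahn_push _ _ _ (Sn n) (Sn (S n)) _ (pre_inj n)); last exact: ht.
    by move=> x y hx hy; apply: rf; [exact: hx.1|exact: hy.1].
  move=> x [hx lx]; split; first exact: qm.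
  rewrite -pre_one; apply: ql => //; exact: one_mem.
move=> a b [_ sa] [_ sb] h.
apply: (hlt_push _ _ _ (Mm n) _ _ (pre_inj n) rf) => //.
  by move=> x /sa [].
by move=> x /sb [].
Qed.

Lemma surj n (a : T k Gam n -> k) : hahn_in (L n) (Mm n) a ->
  exists j (b : T k Gam (Nat.add j n) -> k),
    hahn_in (L (Nat.add j n)) (Mm (Nat.add j n)) b /\
    push (P (Nat.add j n)) b = push (emb k Gam sigma n j) a.
Proof.
move=> ha; exists 1%N, (push (pre n) a); split.
  apply: (hahn_push _ _ _ (Mm n) (Mm (S n)) _ (pre_inj n)); last exact: ha.
    exact: (reflects_of_mono _ _ _ _ _ (sto_n n) (sto_n (S n)) (pre_prop n).1 (pre_prop n).2).
  exact: (pre_prop n).1.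
change (push (P (S n)) (push (pre n) a) = push (l_n k Gam sigma n) a).
rewrite push_comp; [|exact: psi_inj|exact: pre_inj].
congr push; apply: functional_extensionality => x; exact: psi_pre.
Qed.

Lemma commute_l g : push (P 0) (l_n k Gam sigma 0 g) = l_n k Gam sigma 0 (P 0 g).
Proof.
have xi : injective (fun g : Gam => @xmon k Gam (sigma g)).
  by move=> a b /xmon_inj /sigma_inj.
rewrite /= /lsig push_comp; [|exact: (push_inj _ sigma_inj)|exact: xi].
rewrite push_comp; [|exact: xi|exact: sigma_inj].
congr push; apply: functional_extensionality => x; exact: push_xmon.
Qed.

End Levels.

Theorem mainTheorem14 (d : Order.disp_t) (Gam : orderType d) (sigma : Gam -> Gam)
  (sigma_mono : forall a b : Gam, (a < b)%O -> (sigma a < sigma b)%O)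
  (sigma_lt : forall g : Gam, (sigma g < g)%O)
  (k : realFieldType) (log : k -> k)
  (log_mul : forall a b : k, 0 < a -> 0 < b -> log (a * b) = log a + log b)
  (log_mono : forall a b : k, 0 < a -> a < b -> log a < log b)
  (log_surj : forall y : k, exists a : k, 0 < a /\ log a = y) :
  let G := mem_n k Gam 0 in
  let psi := psi_n k Gam sigma 0 in
  (* psi_sigma is an order-preserving group embedding G -> G ... *)
  ((forall g, G g -> G (psi g)) /\
   (forall g h, G g -> G h -> psi (mul_n k Gam 0 g h) = mul_n k Gam 0 (psi g) (psi h)) /\
   (forall g h, G g -> G h -> lt_n k Gam 0 g h -> lt_n k Gam 0 (psi g) (psi h)) /\
  (* ... commuting with l_sigma (a morphism of (k((G)), l_sigma)) ... *)
   (forall g, G g -> push psi (l_n k Gam sigma 0 g) = l_n k Gam sigma 0 (psi g))) /\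
  (* ... which is contracting *)
  (forall g, G g -> lt_n k Gam 0 (one_n k Gam 0) g -> lt_n k Gam 0 (psi g) g) /\
  (* psi^EL is a contraction on G^EL = U_n G^{#n} *)
  (forall n (g : T k Gam n), mem_n k Gam n g -> lt_n k Gam n (one_n k Gam n) g ->
      lt_n k Gam n (psi_n k Gam sigma n g) g) /\
  (* psi^EL is surjective on k((G))^{EL} = U_n k((G^{#n})) *)
  (forall n (a : T k Gam n -> k), hahn_in (lt_n k Gam n) (mem_n k Gam n) a ->
      exists j (b : T k Gam (Nat.add j n) -> k),
        hahn_in (lt_n k Gam (Nat.add j n)) (mem_n k Gam (Nat.add j n)) b /\
        push (psi_n k Gam sigma (Nat.add j n)) b = push (emb k Gam sigma n j) a).
Proof.
move=> G psi; rewrite /G /psi.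
have pp := psi_prop _ _ _ sigma_mono k 0.
split; [split; [|split; [|split]]|split; [|split]].
- exact: pp.1.
- move=> g h _ _; exact: push_add.
- exact: pp.2.
- move=> g _; exact: (commute_l _ _ _ sigma_mono).
- move=> g; exact: (psi_contr _ _ _ sigma_mono sigma_lt).
- move=> n g; exact: (psi_contr _ _ _ sigma_mono sigma_lt).
- move=> n a; exact: (surj _ _ _ sigma_mono).
Qed.
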